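(* Let $\alpha,\theta_2\in(0,\pi/2)$ satisfy $$\frac{1}{\cos\alpha}\ln\Big(\frac{1}{\sin\alpha}+\cot\alpha\Big)=(\pi-\theta_2)\cot\theta_2.$$ Then $$\frac{1}{\sin\alpha}+\frac{1}{\cot\alpha}\ln\Big(\frac{1}{\sin\alpha}+\cot\alpha\Big)\ge\frac{\pi-\theta_2}{\sin\theta_2}-\cos\theta_2.$$ *)

(* Defs.v *)
From Stdlib Require Export Reals.
Open Scope R_scope.
Definition cot (x : R) : R := cos x / sin x.

(* Main.v *)
Require Import Defs.
From Stdlib Require Import Reals Lra Lia Psatz Arith Factorial.
Open Scope R_scope.

Lemma cosub (a:R) : cos_approx a 4 = 1 - a^2/2 + a^4/24 - a^6/720 + a^8/40320.
Proof. unfold cos_approx, cos_term. cbn [sum_f_R0].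
 replace (INR (fact (2*4))) with 40320.
 replace (INR (fact (2*3))) with 720.
 replace (INR (fact (2*2))) with 24.
 replace (INR (fact (2*1))) with 2.
 replace (INR (fact (2*0))) with 1.
 all: try (rewrite INR_IZR_INZ; vm_compute; reflexivity).
 simpl. field.
Qed.

Lemma coslb (a:R) : cos_approx a 3 = 1 - a^2/2 + a^4/24 - a^6/720.
Proof. unfold cos_approx, cos_term. cbn [sum_f_R0].
 replace (INR (fact (2*3))) with 720.
 replace (INR (fact (2*2))) with 24.
 replace (INR (fact (2*1))) with 2.
 replace (INR (fact (2*0))) with 1.
 all: try (rewrite INR_IZR_INZ; vm_compute; reflexivity).
 simpl. field.
Qed.

Lemma sinub (a:R) : sin_approx a 2 = a - a^3/6 + a^5/120.
Proof. unfold sin_approx, sin_term. cbn [sum_f_R0].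
 replace (INR (fact (2*2+1))) with 120.
 replace (INR (fact (2*1+1))) with 6.
 replace (INR (fact (2*0+1))) with 1.
 all: try (rewrite INR_IZR_INZ; vm_compute; reflexivity).
 simpl. field.
Qed.

Lemma PI_lt : PI < 3.15.
Proof.
  destruct (Rlt_or_le PI 3.15) as [h|h]; [exact h|exfalso].
  assert (H1 : 1.575 <= PI/2) by lra.
  assert (H0 : - PI / 2 <= 1.575) by (pose proof PI_RGT_0; lra).
  pose proof (cos_ge_0 1.575 ltac:(lra) H1) as c0.
  destruct (cos_bound 1.575 1 H0 H1) as [_ cu].
  replace (2 * (1 + 1))%nat with 4%nat in cu by reflexivity.
  rewrite cosub in cu. simpl in cu. lra.
Qed.

Lemma poly_bound (t : R) : 0 <= t <= 1.575 ->
  (3.15 - t) * (t - t^3/6 + t^5/120) <= 1.8 + 0.2 * (1 - t^2/2 + t^4/24 - t^6/720).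
Proof.
  intros [H1 H2].
  destruct (Rle_or_lt t 1) as [h1|h1].
  { assert (h: 0 <= (t-0)*(1-t)) by nra. nra. }
  destruct (Rle_or_lt t 1.2) as [h2|h2].
  { assert (h: 0 <= (t-1)*(1.2-t)) by nra. nra. }
  assert (h: 0 <= (t-1.2)*(1.575-t)) by nra. nra.
Qed.

Lemma trig_bound (t : R) : 0 < t < PI/2 ->
  (PI - t) * sin t <= 1.8 + 0.2 * cos t.
Proof.
  intros [H1 H2]. pose proof PI_lt.
  assert (Hs : 0 <= sin t) by (apply sin_ge_0; lra).
  destruct (sin_bound t 0 ltac:(lra) ltac:(lra)) as [_ su].
  replace (2 * (0 + 1))%nat with 2%nat in su by reflexivity.
  rewrite sinub in su.
  destruct (cos_bound t 1 ltac:(lra) ltac:(lra)) as [cl _].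
  replace (2 * 1 + 1)%nat with 3%nat in cl by reflexivity.
  rewrite coslb in cl.
  pose proof (poly_bound t ltac:(lra)).
  assert ((PI - t) * sin t <= (3.15 - t) * sin t) by nra.
  assert ((3.15 - t) * sin t <= (3.15 - t) * (t - t^3/6 + t^5/120))
    by (apply Rmult_le_compat_l; lra).
  lra.
Qed.

Lemma cosh_ge1 (x : R) : 1 <= cosh x.
Proof.
  unfold cosh. rewrite exp_Ropp. pose proof (exp_pos x) as E.
  assert (exp x * / exp x = 1) by (field; lra).
  assert (0 < / exp x) by (apply Rinv_0_lt_compat; lra).
  assert (0 <= (exp x - 1) * (exp x - 1) * / exp x)
    by (apply Rmult_le_pos; [pose proof (Rle_0_sqr (exp x - 1)); unfold Rsqr in *; lra|lra]).
  nra.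
Qed.

Lemma sinh_ge (l : R) : 0 <= l -> l <= sinh l.
Proof.
  intros Hl. destruct (Req_dec l 0) as [->|Hn].
  { rewrite sinh_0; lra. }
  assert (pr : derivable (sinh - id)%F) by
    (apply derivable_minus; [apply derivable_sinh | apply derivable_id]).
  assert (H := derive_increasing_interv_var 0 l (sinh - id)%F pr ltac:(lra)).
  assert (Hd : forall t, 0 < t < l -> 0 <= derive_pt (sinh - id)%F t (pr t)).
  { intros t _. rewrite (derive_pt_eq_0 _ _ (cosh t - 1)).
    - pose proof (cosh_ge1 t); lra.
    - apply derivable_pt_lim_minus; [apply derivable_pt_lim_sinh | apply derivable_pt_lim_id]. }
  specialize (H Hd 0 l ltac:(lra) ltac:(lra) ltac:(lra)).
  unfold minus_fct, id in H. rewrite sinh_0 in H. lra.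
Qed.

Theorem lemma4p6 (alpha theta2 : R)
  (ha : 0 < alpha < PI / 2) (ht : 0 < theta2 < PI / 2)
  (hrel : (1 / cos alpha) * ln (1 / sin alpha + cot alpha)
          = (PI - theta2) * cot theta2) :
  1 / sin alpha + (1 / cot alpha) * ln (1 / sin alpha + cot alpha)
  >= (PI - theta2) / sin theta2 - cos theta2.
Proof.
  unfold cot in *.
  pose proof PI_RGT_0.
  assert (s0 : 0 < sin alpha) by (apply sin_gt_0; lra).
  assert (c0 : 0 < cos alpha) by (apply cos_gt_0; lra).
  assert (w0 : 0 < sin theta2) by (apply sin_gt_0; lra).
  assert (u0 : 0 < cos theta2) by (apply cos_gt_0; lra).
  pose proof (sin2_cos2 alpha) as sc. pose proof (sin2_cos2 theta2) as wu.
  unfold Rsqr in sc, wu.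
  pose proof (trig_bound theta2 ht) as TB.
  set (s := sin alpha) in *. set (c := cos alpha) in *.
  set (w := sin theta2) in *. set (u := cos theta2) in *.
  set (P := PI - theta2) in *.
  assert (P0 : 0 < P) by (unfold P; lra).
  set (y := 1 / s + c / s) in *.
  assert (y0 : 0 < y) by (unfold y; apply Rplus_lt_0_compat; apply Rdiv_lt_0_compat; lra).
  set (L := ln y) in *.
  assert (eL : exp L = y) by (apply exp_ln; exact y0).
  assert (Lup : L <= c / s).
  { destruct (Rle_or_lt 0 L) as [h|h].
    - pose proof (sinh_ge L h) as HS. unfold sinh in HS.
      rewrite exp_Ropp, eL in HS.
      assert (Hq : (y - / y) / 2 = c / s).
      { unfold y. replace (1 / s + c / s) with ((1 + c) / s) by (field; lra).
        replace (/ ((1 + c) / s)) with (s / (1 + c)) by (field; lra).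
        apply (Rmult_eq_reg_r (2 * s * (1 + c))); [|nra].
        replace (((1 + c) / s - s / (1 + c)) / 2 * (2 * s * (1 + c)))
          with ((1 + c) * (1 + c) - s * s) by (field; lra).
        replace (c / s * (2 * s * (1 + c))) with (2 * c * (1 + c)) by (field; lra).
        nra. }
      lra.
    - assert (0 < c / s) by (apply Rdiv_lt_0_compat; lra). lra. }
  assert (Llo : 0.8 * c <= L).
  { pose proof (exp_ineq1_le (- L)) as E. rewrite exp_Ropp, eL in E.
    assert (Hq : / y = s / (1 + c)) by (unfold y; field; lra).
    rewrite Hq in E.
    assert (0.8 * c <= 1 - s / (1 + c)).
    { apply Rmult_le_reg_r with (1 + c); [lra|].
      replace ((1 - s / (1 + c)) * (1 + c)) with (1 + c - s) by (field; lra).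
      assert (c1 : c <= 1) by nra.

      assert (p3 : 0 <= 0.4 - 0.56*c - 0.32*c*c + 0.64*c*c*c).
      { assert (0 <= c * ((c - 0.77) * (c - 0.77))) by
          (apply Rmult_le_pos; [lra| pose proof (Rle_0_sqr (c - 0.77)); unfold Rsqr in *; lra]).
        assert (0 <= 0.4 - 0.9395*c + 0.6656*c*c) by
          (pose proof (Rle_0_sqr (c - 0.7057)); unfold Rsqr in *; nra).
        nra. }
      set (X := 1 + 0.2*c - 0.8*c*c).
      assert (X0 : 0 < X) by (unfold X; nra).
      assert (XX : s * s <= X * X) by (unfold X; nra).
      assert (s <= X) by nra.
      unfold X in *; nra. }
    lra. }
  assert (HL : L = c * (P * u / w)).
  { assert (hrel' : 1 / c * L = P * (u / w)) by exact hrel.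
    apply (Rmult_eq_reg_l (1 / c)); [| apply Rgt_not_eq, Rdiv_lt_0_compat; lra].
    rewrite hrel'. field; lra. }
  set (K := P * u / w) in *.
  assert (K08 : 0.8 <= K) by nra.
  assert (sK : s * K <= 1).
  { assert (c * K <= c / s) by lra.
    assert (K <= 1 / s) by (apply Rmult_le_reg_l with c; [lra|]; unfold Rdiv in *; lra).
    apply Rmult_le_reg_r with (/ s); [apply Rinv_0_lt_compat; lra|].
    replace (s * K * / s) with K by (field; lra). unfold Rdiv in *; lra. }
  assert (g : P * u >= 0.8 * w).
  { unfold K in K08. apply Rmult_le_compat_r with (r := w) in K08; [|lra].
    replace (P * u / w * w) with (P * u) in K08 by (field; lra). lra. }
  assert (f : P * (1 - u) <= w * (1 + u)).
  { assert (id : w * (1 + u) - P * (1 - u) - (1 - u) * (P * u - 0.8 * w)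
                 = w * ((1 + u) + 0.8 * (1 - u) - P * w)) by nra.
    assert (0 <= w * ((1 + u) + 0.8 * (1 - u) - P * w)) by nra.
    assert (0 <= (1 - u) * (P * u - 0.8 * w)) by nra.
    lra. }
  assert (RHS : P / w - u <= K + 1).
  { unfold K. apply Rmult_le_reg_r with w; [lra|].
    replace ((P / w - u) * w) with (P - u * w) by (field; lra).
    replace ((P * u / w + 1) * w) with (P * u + w) by (field; lra). nra. }
  assert (LHS : 1 / s + 1 / (c / s) * L = 1 / s + s * K).
  { rewrite HL. field; lra. }
  rewrite LHS.
  assert (K + 1 <= 1 / s + s * K).
  { assert (s <= 1) by nra.
    apply Rmult_le_reg_r with s; [lra|].
    replace ((1 / s + s * K) * s) with (1 + s * (s * K)) by (field; lra).
    nra. }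
  lra.
Qed.
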